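(* Let $N^h\ge 2$ be an integer and $h=1/N^h$. Let $\lambda_j=j^2\pi^2$ be the $j$-th exact eigenvalue of $-u''=\lambda u$ on $(0,1)$ with $u(0)=u(1)=0$, and let $\lambda^h_{sq,j}$ be the $j$-th approximate eigenvalue (eigenvalues sorted in nondecreasing order, counting multiplicity) of the linear SoftFEMBQ generalized matrix eigenvalue problem $(\mathbf{K}-\eta_K\mathbf{S})\mathbf{U}=\lambda^h(\alpha\mathbf{M}_G+(1-\alpha)\mathbf{M}_L)\mathbf{U}$ described in the context, with $\eta_K=\frac{1}{20}$ and $\alpha=\frac45$. Then \[ \frac{|\lambda^h_{sq,j}-\lambda_j|}{\lambda_j}<\frac{1}{1440}(j\pi h)^6\qquad\text{for all } j\in\{1,\dots,N^h-1\}. \]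
   Context: Setting (linear finite elements, SoftFEM with blended quadrature, in 1D): Let $x_k=kh$, $k=0,\dots,N^h$, be a uniform mesh of $[0,1]$. Let $V^h$ be the space of continuous functions on $[0,1]$ that are affine on each $[x_{k-1},x_k]$ and vanish at $0$ and $1$, with hat basis $\phi_k$, $k=1,\dots,N^h-1$, $\phi_k(x_l)=\delta_{kl}$. For $v\in V^h$ and an interior node $x_k$ let $[\![v']\!](x_k)=v'(x_k^-)-v'(x_k^+)$. Define $a(v,w)=\int_0^1 v'w'\,dx$, $s(v,w)=\sum_{k=1}^{N^h-1} h\,[\![v']\!](x_k)[\![w']\!](x_k)$, $\mathbf{K}_{kl}=a(\phi_l,\phi_k)$, $\mathbf{S}_{kl}=s(\phi_l,\phi_k)$. $\mathbf{M}_G$ is the mass matrix $\int_0^1\phi_l\phi_k\,dx$ computed elementwise by the 2-point Gauss–Legendre rule, and $\mathbf{M}_L$ the one computed by the 2-point Gauss–Lobatto (trapezoidal) rule. Explicitly, $\mathbf{K}=\frac1h\,\mathrm{tridiag}(-1,2,-1)$, $\mathbf{M}_G=h\,\mathrm{tridiag}(\tfrac16,\tfrac23,\tfrac16)$, $\mathbf{M}_L=h\,\mathbf{I}$, and $\mathbf{S}=\frac1h$ times the symmetric pentadiagonal matrix with rows $(1,-4,6,-4,1)$ except that the first and last diagonal entries are $5$; all are $(N^h-1)\times(N^h-1)$. *)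

(* Defs.v *)
From HB Require Import structures.
From mathcomp Require Import all_boot all_order all_algebra.
From mathcomp Require Import reals trigo.
Set Implicit Arguments. Unset Strict Implicit. Unset Printing Implicit Defensive.
Import Order.TTheory GRing.Theory Num.Theory.
Local Open Scope ring_scope.

Section Defs.
Variable R : realType.

Definition tridiag (n : nat) (a b : R) : 'M[R]_n :=
  \matrix_(i, j) (if i == j then a
                  else if ((i : nat) == j.+1) || ((j : nat) == i.+1) then b else 0).

(* Interior nodes x_1..x_{N-1} are indexed by 'I_(N.-1) (index i <-> node i+1). *)
Definition hmesh (N : nat) : R := (N%:R)^-1.

Definition Tmat (N : nat) : 'M[R]_(N.-1) := tridiag N.-1 2 (-1).

Definition Kmat (N : nat) : 'M[R]_(N.-1) := (hmesh N)^-1 *: Tmat N.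

(* S_kl = sum_m h [[phi_l']](x_m) [[phi_k']](x_m); since
   [[phi_l']](x_m) = (1/h) T_{ml}, this is S = (1/h) T^T T = (1/h) T T
   (pentadiagonal rows (1,-4,6,-4,1), corner diagonal entries 5). *)
Definition jump (N : nat) : 'M[R]_(N.-1) := (hmesh N)^-1 *: Tmat N.
Definition Smat (N : nat) : 'M[R]_(N.-1) := hmesh N *: ((jump N)^T *m jump N).

(* Gauss-Legendre (consistent) and Gauss-Lobatto (lumped) mass matrices *)
Definition MGmat (N : nat) : 'M[R]_(N.-1) := hmesh N *: tridiag N.-1 (2/3) (1/6).
Definition MLmat (N : nat) : 'M[R]_(N.-1) := hmesh N *: 1%:M.

Definition pencil (n : nat) (A B : 'M[R]_n) : 'M[{poly R}]_n :=
  map_mx polyC A - 'X *: map_mx polyC B.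

(* s is the nondecreasing list of the generalized eigenvalues of A U = x B U,
   counted with (algebraic) multiplicity: the roots of det(A - x B). *)
Definition gen_eigs (n : nat) (A B : 'M[R]_n) (s : seq R) : Prop :=
  size s = n /\ sorted <=%R s /\
  exists c : R, c != 0 /\ \det (pencil A B) = c *: \prod_(x <- s) ('X - x%:P).

Definition softA (N : nat) (etaK : R) : 'M[R]_(N.-1) := Kmat N - etaK *: Smat N.
Definition softB (N : nat) (alpha : R) : 'M[R]_(N.-1) :=
  alpha *: MGmat N + (1 - alpha) *: MLmat N.

Definition lam_exact (j : nat) : R := (j%:R * pi) ^+ 2.

End Defs.

(* Main.v *)
Require Import Defs.
From HB Require Import structures.
From mathcomp Require Import all_boot all_order all_algebra.
From mathcomp Require Import reals trigo.
From mathcomp Require Import boolp classical_sets topology normedtype derive realfun.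
From mathcomp Require Import ring lra zify.
Import Order.TTheory GRing.Theory Num.Theory numFieldNormedType.Exports.
Local Open Scope ring_scope.

Section S.
Variable R : realType.
Lemma nonneg_of_deriv (f df : R -> R) : (forall x : R, is_derive x 1 f (df x)) -> f 0 = 0 ->
  (forall x, 0 <= x -> 0 <= df x) -> forall x, 0 <= x -> 0 <= f x.
Proof.
move=> fd f0 dfp x x0.
have cf : continuous f.
  by move=> y; apply/differentiable_continuous/derivable1_diffP; apply: ex_derive; apply: fd.
have [c /andP[c0 cx] E] := @MVT_segment R f df 0 x x0 (fun y _ => fd y) (continuous_subspaceT cf).
have -> : f x = df c * (x - 0) by rewrite -E f0 subr0.
apply: mulr_ge0; [apply: dfp| rewrite subr0]; by [].
Qed.

Lemma taylor1 (x : R) : 0 <= x -> 0 <= x - sin x.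
Proof.
have D : forall y : R, is_derive y 1 (fun y => y - sin y) (1 - cos y).
  by move=> y; apply: is_derive_eq; (try rewrite -![_ *: _]/(_ * _)); field.
move: x; apply: (@nonneg_of_deriv _ _ D).
- by rewrite ?sin0 ?cos0; ring.
- by move=> y y0; rewrite subr_ge0 cos_le1.
Qed.

Lemma taylor2 (x : R) : 0 <= x -> 0 <= cos x - 1 + x^+2/2.
Proof.
have D : forall y : R, is_derive y 1 (fun y => cos y - 1 + y^+2/2) (y - sin y).
  by move=> y; apply: is_derive_eq; (try rewrite -![_ *: _]/(_ * _)); field.
move: x; apply: (@nonneg_of_deriv _ _ D).
- by rewrite ?sin0 ?cos0; ring.
- by move=> y y0; exact: taylor1.
Qed.

Lemma taylor3 (x : R) : 0 <= x -> 0 <= sin x - x + x^+3/6.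
Proof.
have D : forall y : R, is_derive y 1 (fun y => sin y - y + y^+3/6) (cos y - 1 + y^+2/2).
  by move=> y; apply: is_derive_eq; (try rewrite -![_ *: _]/(_ * _)); field.
move: x; apply: (@nonneg_of_deriv _ _ D).
- by rewrite ?sin0 ?cos0; ring.
- by move=> y y0; exact: taylor2.
Qed.

Lemma taylor4 (x : R) : 0 <= x -> 0 <= 1 - x^+2/2 + x^+4/24 - cos x.
Proof.
have D : forall y : R, is_derive y 1 (fun y => 1 - y^+2/2 + y^+4/24 - cos y) (sin y - y + y^+3/6).
  by move=> y; apply: is_derive_eq; (try rewrite -![_ *: _]/(_ * _)); field.
move: x; apply: (@nonneg_of_deriv _ _ D).
- by rewrite ?sin0 ?cos0; ring.
- by move=> y y0; exact: taylor3.
Qed.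

Lemma taylor5 (x : R) : 0 <= x -> 0 <= x - x^+3/6 + x^+5/120 - sin x.
Proof.
have D : forall y : R, is_derive y 1 (fun y => y - y^+3/6 + y^+5/120 - sin y) (1 - y^+2/2 + y^+4/24 - cos y).
  by move=> y; apply: is_derive_eq; (try rewrite -![_ *: _]/(_ * _)); field.
move: x; apply: (@nonneg_of_deriv _ _ D).
- by rewrite ?sin0 ?cos0; ring.
- by move=> y y0; exact: taylor4.
Qed.

Lemma taylor6 (x : R) : 0 <= x -> 0 <= cos x - 1 + x^+2/2 - x^+4/24 + x^+6/720.
Proof.
have D : forall y : R, is_derive y 1 (fun y => cos y - 1 + y^+2/2 - y^+4/24 + y^+6/720) (y - y^+3/6 + y^+5/120 - sin y).
  by move=> y; apply: is_derive_eq; (try rewrite -![_ *: _]/(_ * _)); field.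
move: x; apply: (@nonneg_of_deriv _ _ D).
- by rewrite ?sin0 ?cos0; ring.
- by move=> y y0; exact: taylor5.
Qed.

Lemma taylor7 (x : R) : 0 <= x -> 0 <= sin x - x + x^+3/6 - x^+5/120 + x^+7/5040.
Proof.
have D : forall y : R, is_derive y 1 (fun y => sin y - y + y^+3/6 - y^+5/120 + y^+7/5040) (cos y - 1 + y^+2/2 - y^+4/24 + y^+6/720).
  by move=> y; apply: is_derive_eq; (try rewrite -![_ *: _]/(_ * _)); field.
move: x; apply: (@nonneg_of_deriv _ _ D).
- by rewrite ?sin0 ?cos0; ring.
- by move=> y y0; exact: taylor6.
Qed.

Lemma taylor8 (x : R) : 0 <= x -> 0 <= 1 - x^+2/2 + x^+4/24 - x^+6/720 + x^+8/(720*56) - cos x.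
Proof.
have D : forall y : R, is_derive y 1 (fun y => 1 - y^+2/2 + y^+4/24 - y^+6/720 + y^+8/(720*56) - cos y) (sin y - y + y^+3/6 - y^+5/120 + y^+7/5040).
  by move=> y; apply: is_derive_eq; (try rewrite -![_ *: _]/(_ * _)); field.
move: x; apply: (@nonneg_of_deriv _ _ D).
- by rewrite ?sin0 ?cos0; ring.
- by move=> y y0; exact: taylor7.
Qed.

End S.

Lemma p1 (R : realFieldType) (y : R) : 0 <= y -> y <= 256/25 ->
  0 < 7380 - 900*y + 63*y^+2 - 2*y^+3.
Proof. move=> h1 h2. have h3 : 0 <= y * (256/25 - y) by apply: mulr_ge0; lra. nra. Qed.
Lemma p2 (R : realFieldType) (y : R) : 0 <= y -> y <= 256/25 ->
  0 < (9515*1000+520) - (1733*1000+760)*y + (168*1000+672)*y^+2 - 5936*y^+3 + 109*y^+4.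
Proof. move=> h1 h2. have h3 : 0 <= y * (256/25 - y) by apply: mulr_ge0; lra. nra. Qed.
Section K.
Variable R : realFieldType.

Lemma up_side (c Cl A : R) : Cl <= c -> -1 <= c -> -7 <= Cl -> 0 <= A ->
  3*(1-Cl)*(9+Cl) - A*(11+4*Cl) < 0 -> 3*(1-c)*(9+c) < A*(11+4*c).
Proof.
move=> h1 h2 h3 h4 h5.
have Qd : (3*(1-c)*(9+c) - A*(11+4*c)) - (3*(1-Cl)*(9+Cl) - A*(11+4*Cl))
     = (c - Cl) * (-3*(c+Cl) - 24 - 4*A) by ring.
have t2 : (c - Cl) * (-3*(c+Cl) - 24 - 4*A) <= 0.
  apply: mulr_ge0_le0; first by rewrite subr_ge0.
  lra.
lra.
Qed.

Lemma lo_side (c Cu B : R) : c <= Cu -> -1 <= c -> -7 <= Cu -> 0 <= B ->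
  0 < 3*(1-Cu)*(9+Cu) - B*(11+4*Cu) -> B*(11+4*c) < 3*(1-c)*(9+c).
Proof.
move=> h1 h2 h3 h4 h5.
have Qd : (3*(1-c)*(9+c) - B*(11+4*c)) - (3*(1-Cu)*(9+Cu) - B*(11+4*Cu))
     = (Cu - c) * (3*(c+Cu) + 24 + 4*B) by ring.
have t2 : 0 <= (Cu - c) * (3*(c+Cu) + 24 + 4*B).
  apply: mulr_ge0; first by rewrite subr_ge0.
  lra.
lra.
Qed.

Lemma fin_side (N D y z : R) : 0 < D -> 0 < y -> N < (y + z) * D -> (y - z) * D < N ->
  `|N / D - y| / y < z / y.
Proof.
move=> D0 y0 h1 h2.
rewrite ltr_pM2r ?invr_gt0 // ltr_norml; apply/andP; split.
- rewrite ltrBrDl ltr_pdivlMr //; lra.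
- rewrite ltrBlDl ltr_pdivrMr //; lra.
Qed.

Lemma y3_le (y : R) : 0 < y -> y <= 256/25 -> y^+3 <= 1074.
Proof.
move=> y0 y1.
have e : y^+3 = y * (y * y) by rewrite !exprS expr0 mulr1.
have h1 : y * y <= 256/25 * (256/25) by apply: ler_pM => //; try lra.
have h2 : y * (y * y) <= 256/25 * (256/25 * (256/25)).
  by apply: ler_pM => //; try lra; apply: mulr_ge0; lra.
rewrite e; lra.
Qed.

Lemma Cl7 (y : R) : 0 < y -> y <= 256/25 -> -7 <= 1 - y/2 + y^+2/24 - y^+3/720.
Proof.
move=> y0 y1; have := @y3_le y y0 y1.
have : 0 <= y^+2 by rewrite exprn_ge0 // ltW.
lra.
Qed.

Lemma QCl_eq (y Cl A : R) : Cl = 1 - y/2 + y^+2/24 - y^+3/720 -> A = y + y^+4/1440 ->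
  3*(1-Cl)*(9+Cl) - A*(11+4*Cl) = - (y^+4 * (7380 - 900*y + 63*y^+2 - 2*y^+3)) / (720*720).
Proof. by move=> -> ->; field. Qed.

Lemma QCu_eq (y Cu B : R) : Cu = 1 - y/2 + y^+2/24 - y^+3/720 + y^+4/(720*56) -> B = y - y^+4/1440 ->
  3*(1-Cu)*(9+Cu) - B*(11+4*Cu) = (y^+4 * ((9515*1000+520) - (1733*1000+760)*y + (168*1000+672)*y^+2 - 5936*y^+3 + 109*y^+4)) / (720*720*56*56).
Proof. by move=> -> ->; field. Qed.

Lemma keyy (y c : R) : 0 < y -> y <= 256/25 ->
  1 - y/2 + y^+2/24 - y^+3/720 <= c ->
  c <= 1 - y/2 + y^+2/24 - y^+3/720 + y^+4/(720*56) -> -1 <= c ->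
  `|3*(1-c)*(9+c)/(11+4*c) - y| / y < y^+3/1440.
Proof.
move=> y0 y1 hl hu c1.
have y4 : 0 <= y^+4 by rewrite exprn_ge0 // ltW.
have y4' : 0 < y^+4 by rewrite exprn_gt0.
have e4 : y^+3/1440 = (y^+4/1440) / y by rewrite exprS; field; rewrite gt_eqF.
rewrite e4; apply: fin_side => //; first lra.
- apply: (@up_side c _ (y + y^+4/1440) hl c1 (@Cl7 y y0 y1)).
    by apply: addr_ge0; [exact: ltW | apply: divr_ge0 => //; lra].
  rewrite (@QCl_eq y _ _ erefl erefl) mulNr oppr_lt0.
  apply: divr_gt0; last lra.
  by apply: mulr_gt0 => //; apply: p1 => //; exact: ltW.
- apply: (@lo_side c _ (y - y^+4/1440) hu c1).
  + have := @Cl7 y y0 y1; have : 0 <= y^+4/(720*56) by apply: divr_ge0 => //; lra.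
    lra.
  + rewrite subr_ge0 ler_pdivrMr; last lra.
    have e : y^+4 = y * y^+3 by rewrite exprS.
    rewrite e; have := @y3_le y y0 y1 => h.
    have : y * y^+3 <= y * 1074 by rewrite ler_pM2l.
    lra.
  rewrite (@QCu_eq y _ _ erefl erefl).
  apply: divr_gt0; last lra.
  by apply: mulr_gt0 => //; apply: p2 => //; exact: ltW.
Qed.
End K.

Section LA.
Variable R : realType.

Lemma sum_delta n (F : nat -> R) m :
  \sum_(l < n) F l * (l == m :> nat)%:R = if (m < n)%N then F m else 0.
Proof.
rewrite -(@big_ord1_eq R 0 +%R F m n) [RHS]big_mkcond; apply: eq_bigr => l _ /=.
by case: eqP => _; rewrite ?mulr1 ?mulr0.
Qed.

Lemma tri_entry (a b : R) (l k : nat) :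
  (if l == k then a else if (l == k.+1) || (k == l.+1) then b else 0)
  = a * (l == k)%:R + b * (l == k.+1)%:R + b * (k == l.+1)%:R.
Proof.
case: eqP => e1; case: eqP => e2; case: eqP => e3 /=;
  rewrite ?mulr1 ?mulr0 ?addr0 ?add0r //; lia.
Qed.

Lemma tri_sum n (a b : R) (f : nat -> R) (k : 'I_n) : f 0%N = 0 -> f n.+1 = 0 ->
  \sum_(l < n) f l.+1 * tridiag n a b l k = a * f k.+1 + b * (f k + f k.+2).
Proof.
move=> f0 fn.
under eq_bigr => l _ do rewrite mxE tri_entry !mulrDr.
rewrite !big_split /=.
have e1 : \sum_(l < n) f l.+1 * (a * (l == k :> nat)%:R) = a * f k.+1.
  under eq_bigr => l _ do rewrite mulrCA.
  by rewrite -mulr_sumr (sum_delta _ (fun l => f l.+1)) ltn_ord.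
have e2 : \sum_(l < n) f l.+1 * (b * (l == k.+1 :> nat)%:R) = b * f k.+2.
  under eq_bigr => l _ do rewrite mulrCA.
  rewrite -mulr_sumr (sum_delta _ (fun l => f l.+1)); case: ifP => // /negbT.
  rewrite -leqNgt => kn; have -> : k.+2 = n.+1 by have := ltn_ord k; lia.
  by rewrite fn mulr0.
have e3 : \sum_(l < n) f l.+1 * (b * (k == l.+1 :> nat)%:R) = b * f k.
  under eq_bigr => l _ do rewrite mulrCA.
  rewrite -mulr_sumr; clear e1 e2; case: k => [[|k] kn] /=.
    by rewrite f0 big1 ?mulr0 // => l _; rewrite mulr0.
  under eq_bigr => l _ do rewrite eqSS eq_sym.
  by rewrite (sum_delta _ (fun l => f l.+1)) /= (ltn_trans (ltnSn k) kn).
by rewrite e1 e2 e3; ring.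
Qed.

Lemma sin_natpi m : sin (m%:R * pi) = 0 :> R.
Proof.
elim: m => [|m IH]; first by rewrite mul0r sin0.
by rewrite -natr1 mulrDl mul1r sinDpi IH oppr0.
Qed.

Variable n : nat.
Definition hh : R := (n.+1)%:R^-1.
Definition th (j : nat) : R := (j.+1)%:R * pi * hh.
Definition fs (j m : nat) : R := sin (m%:R * th j).
Definition Qm : 'M[R]_n := \matrix_(j, k) fs j (k : nat).+1.
Definition mu_ (a b : R) (j : nat) : R := a + 2 * b * cos (th j).

Lemma Nr_neq0 : (n.+1)%:R != 0 :> R.
Proof. by rewrite pnatr_eq0. Qed.

Lemma fs0 j : fs j 0 = 0.
Proof. by rewrite /fs mul0r sin0. Qed.

Lemma fsn j : fs j n.+1 = 0.
Proof.
rewrite /fs /th /hh.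
have -> : n.+1%:R * ((j.+1)%:R * pi * (n.+1)%:R^-1) = (j.+1)%:R * pi :> R.
  by field; rewrite addrC natr1; exact: Nr_neq0.
exact: sin_natpi.
Qed.

Lemma fs_rec j m : fs j m + fs j m.+2 = 2 * cos (th j) * fs j m.+1.
Proof.
rewrite /fs.
have -> : m%:R * th j = m.+1%:R * th j - th j by rewrite -natr1; ring.
have -> : m.+2%:R * th j = m.+1%:R * th j + th j by rewrite -(natr1 m.+1); ring.
rewrite sinB sinD; ring.
Qed.

Lemma QT (a b : R) : Qm *m tridiag n a b = diag_mx (\row_j mu_ a b j) *m Qm.
Proof.
apply/matrixP => j k; rewrite mul_diag_mx !mxE.
under eq_bigr => l _ do rewrite mxE.
rewrite (tri_sum n a b (fs j) k (fs0 j) (fsn j)) /mu_.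
by rewrite (fs_rec j k); ring.
Qed.

Lemma tridiag_tr (a b : R) : (tridiag n a b)^T = tridiag n a b.
Proof. by apply/matrixP => i j; rewrite !mxE eq_sym orbC. Qed.

Lemma th_bounds j : (j < n)%N -> 0 < th j < pi.
Proof.
move=> jn; rewrite /th /hh.
have p0 := pi_gt0 R.
have r0 : 0 < (j.+1)%:R / (n.+1)%:R :> R by apply: divr_gt0; rewrite ltr0n.
have r1 : (j.+1)%:R / (n.+1)%:R < 1 :> R.
  by rewrite ltr_pdivrMr ?ltr0n // mul1r ltr_nat ltnS.
have -> : (j.+1)%:R * pi * (n.+1)%:R^-1 = pi * ((j.+1)%:R / (n.+1)%:R) :> R.
  by rewrite [RHS]mulrA [pi * _]mulrC.
apply/andP; split; first exact: mulr_gt0.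
by rewrite -[ltRHS]mulr1 ltr_pM2l.
Qed.

Lemma cos_th_inj (i j : 'I_n) : cos (th i) = cos (th j) -> i = j.
Proof.
move=> e.
have /andP[i0 i1] := @th_bounds i (ltn_ord i).
have /andP[j0 j1] := @th_bounds j (ltn_ord j).
have : th i = th j.
  apply: cos_inj => //; rewrite in_itv /= ?ltW //.
move=> e'.
have pn : pi * hh != 0.
  by rewrite mulf_neq0 // ?invr_eq0 ?Nr_neq0 // gt_eqF // pi_gt0.
have : (i.+1)%:R = (j.+1)%:R :> R by apply: (mulIf pn); rewrite !mulrA.
move/eqP; rewrite eqr_nat eqSS => /eqP.
exact: val_inj.
Qed.

Lemma comm_offdiag (d : 'rV[R]_n) (M : 'M[R]_n) :
  diag_mx d *m M = M *m diag_mx d -> forall i j, d 0 i != d 0 j -> M i j = 0.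
Proof.
move=> E i j dij; have := congr1 (fun A : 'M[R]_n => A i j) E.
rewrite mul_diag_mx mul_mx_diag !mxE => e.
have : (d 0 i - d 0 j) * M i j = 0 by rewrite mulrBl e mulrC subrr.
by move/eqP; rewrite mulf_eq0 subr_eq0 (negPf dij) => /eqP.
Qed.

Lemma detQ_neq0 : \det Qm != 0.
Proof.
pose T : 'M[R]_n := tridiag n 2 (-1).
pose D : 'M[R]_n := diag_mx (\row_j mu_ 2 (-1) j).
pose G := Qm *m Qm^T.
have QTe : Qm *m T = D *m Qm by exact: QT.
have DG : D *m G = G *m D.
  rewrite /G mulmxA -QTe -mulmxA -[in RHS]mulmxA.
  congr (_ *m _).
  have DT : D^T = D by rewrite /D tr_diag_mx.
  have TT : T^T = T by exact: tridiag_tr.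
  by rewrite -[in LHS]TT -[in RHS]DT -!trmx_mul QTe.
have Gdiag : forall i j : 'I_n, i != j -> G i j = 0.
  move=> i j ij; apply: (@comm_offdiag (\row_j mu_ 2 (-1) j) G DG).
  rewrite !mxE /mu_; apply/eqP => e; move/negP: ij; apply.
  apply/eqP/cos_th_inj.
  have : 2 * -1 * cos (th i) = 2 * -1 * cos (th j) by move: e; lra.
  have h2 : (2 * -1 : R) != 0 by rewrite mulrN1 oppr_eq0 pnatr_eq0.
  by move=> h; apply: (mulfI h2 h).
have Gtrig : is_trig_mx G.
  apply/is_trig_mxP => i j ij; apply: Gdiag.
  by apply/eqP => e; rewrite e ltnn in ij.
have Gii : forall i, 0 < G i i.
  move=> i; rewrite /G !mxE.
  have n0 : (0 < n)%N by case: (i) => [i' ilt]; lia.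
  rewrite (bigD1 (Ordinal n0)) //=.
  apply: ltr_pwDl.
    rewrite !mxE -expr2 exprn_gt0 //.
    rewrite /fs mul1r; apply: sin_gt0_pi; exact: th_bounds.
  by apply: sumr_ge0 => k _; rewrite !mxE -expr2 sqr_ge0.
have dG : 0 < \det G.
  by rewrite (det_trig Gtrig); apply: prodr_gt0 => i _; exact: Gii.
apply/eqP => dQ; move: dG.
by rewrite /G det_mulmx det_tr dQ mul0r ltxx.
Qed.

Section Eig.
Implicit Types (M D : 'M[R]_n).
Lemma eig_mul M1 M2 D1 D2 : Qm *m M1 = D1 *m Qm -> Qm *m M2 = D2 *m Qm ->
  Qm *m (M1 *m M2) = (D1 *m D2) *m Qm.
Proof. by move=> e1 e2; rewrite mulmxA e1 -mulmxA e2 mulmxA. Qed.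
Lemma eig_scale a M D : Qm *m M = D *m Qm -> Qm *m (a *: M) = (a *: D) *m Qm.
Proof. by move=> e; rewrite -scalemxAr e scalemxAl. Qed.
Lemma eig_add M1 M2 D1 D2 : Qm *m M1 = D1 *m Qm -> Qm *m M2 = D2 *m Qm ->
  Qm *m (M1 + M2) = (D1 + D2) *m Qm.
Proof. by move=> e1 e2; rewrite mulmxDr mulmxDl e1 e2. Qed.
Lemma eig_sub M1 M2 D1 D2 : Qm *m M1 = D1 *m Qm -> Qm *m M2 = D2 *m Qm ->
  Qm *m (M1 - M2) = (D1 - D2) *m Qm.
Proof. by move=> e1 e2; rewrite mulmxBr mulmxBl e1 e2. Qed.
Lemma eig_1 : Qm *m 1%:M = 1%:M *m Qm.
Proof. by rewrite mulmx1 mul1mx. Qed.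
End Eig.
Arguments eig_mul {M1 M2 D1 D2}.
Arguments eig_scale a {M D}.
Arguments eig_add {M1 M2 D1 D2}.
Arguments eig_sub {M1 M2 D1 D2}.

Definition muT j := mu_ 2 (-1) j.
Definition muM j := mu_ (2/3) (1/6) j.
Definition DT : 'M[R]_n := diag_mx (\row_j muT j).
Definition DM : 'M[R]_n := diag_mx (\row_j muM j).
Definition aa j := hh^-1 * (muT j - muT j ^+ 2 / 20).
Definition bb j := hh * (4/5 * muM j + 1/5).

Lemma hh_neq0 : hh != 0.
Proof. by rewrite /hh invr_eq0 Nr_neq0. Qed.

Lemma jump_tr : (jump R n.+1)^T = jump R n.+1.
Proof. by apply/matrixP => i j; rewrite !mxE eq_sym orbC. Qed.

Lemma QA : Qm *m softA n.+1 (1/20) = diag_mx (\row_j aa j) *m Qm.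
Proof.
have eT : Qm *m Tmat R n.+1 = DT *m Qm by exact: QT.
have eJ : Qm *m jump R n.+1 = (hh^-1 *: DT) *m Qm by exact: eig_scale.
rewrite /softA /Smat jump_tr.
rewrite (eig_sub (eig_scale _ eT) (eig_scale _ (eig_scale _ (eig_mul eJ eJ)))).
congr (_ *m _); apply/matrixP => i j.
rewrite -scalemxAl -scalemxAr /DT mulmx_diag !mxE /aa /hmesh -/hh.
case: eqP => _; rewrite ?mulr1n ?mulr0n //; first by field; exact: hh_neq0.
by rewrite !mulr0 subr0.
Qed.

Lemma QB : Qm *m softB n.+1 (4/5) = diag_mx (\row_j bb j) *m Qm.
Proof.
have eM : Qm *m tridiag n (2/3) (1/6) = DM *m Qm by exact: QT.
rewrite /softB /MGmat /MLmat.
rewrite (eig_add (eig_scale _ (eig_scale _ eM)) (eig_scale _ (eig_scale _ eig_1))).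
congr (_ *m _); apply/matrixP => i j.
rewrite !mxE /DM ?mxE /bb /hmesh -/hh.
by case: (i == j) => /=; rewrite ?mulr1n ?mulr0n ?mulr0 ?addr0 //; field.
Qed.

Lemma det_pencil : \det (pencil (softA n.+1 (1/20)) (softB n.+1 (4/5)))
  = \prod_(j < n) ((aa j)%:P - 'X * (bb j)%:P).
Proof.
pose Qp := map_mx polyC Qm.
have E : Qp *m pencil (softA n.+1 (1/20)) (softB n.+1 (4/5))
       = diag_mx (\row_j ((aa j)%:P - 'X * (bb j)%:P)) *m Qp.
  rewrite /pencil mulmxBr -scalemxAr -!map_mxM QA QB !map_mxM !map_diag_mx.
  rewrite scalemxAl -mulmxBl; congr (_ *m _).
  apply/matrixP => i j; rewrite !mxE.
  by case: (i == j) => /=; rewrite ?mulr1n ?mulr0n ?mulr0 ?subr0.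
have dQp : \det Qp != 0 by rewrite det_map_mx polyC_eq0 detQ_neq0.
move: (congr1 determinant E); rewrite !det_mulmx det_diag [LHS]mulrC.
move/(mulIf dQp) => ->; apply: eq_bigr => j _; by rewrite mxE.
Qed.

Definition gg (c : R) := 3 * (1 - c) * (9 + c) / (11 + 4 * c).
Definition lam j := aa j / bb j.

Lemma bb_gt0 j : 0 < bb j.
Proof.
rewrite /bb /muM /mu_; apply: mulr_gt0; first by rewrite /hh invr_gt0 ltr0n.
have := cos_geN1 (th j); lra.
Qed.

Lemma hh_gt0 : 0 < hh.
Proof. by rewrite /hh invr_gt0 ltr0n. Qed.

Lemma lamE j : lam j = gg (cos (th j)) / hh ^+ 2.
Proof.
have c1 := cos_geN1 (th j).
have d : 11 + 4 * cos (th j) != 0 by apply/eqP => e; lra.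
have h0 := hh_neq0.
rewrite /lam /aa /bb /gg /muT /muM /mu_.
field; rewrite h0 d /=; apply/eqP => e; lra.
Qed.

Lemma gg_decr (c1 c2 : R) : -1 <= c2 -> c2 < c1 -> c1 <= 1 -> gg c1 < gg c2.
Proof.
move=> h1 h2 h3; rewrite /gg.
have d1 : 0 < 11 + 4 * c1 by lra.
have d2 : 0 < 11 + 4 * c2 by lra.
rewrite -subr_gt0.
have -> : 3 * (1 - c2) * (9 + c2) / (11 + 4 * c2) - 3 * (1 - c1) * (9 + c1) / (11 + 4 * c1)
  = 3 * (c1 - c2) * (124 + 11 * (c1 + c2) + 4 * c1 * c2) / ((11 + 4 * c1) * (11 + 4 * c2)).
  by field; rewrite !gt_eqF.
apply: divr_gt0; last exact: mulr_gt0.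
apply: mulr_gt0; first by lra.
have : -1 <= c1 * c2 by nra.
lra.
Qed.

Lemma lam_incr i j : (i < j)%N -> (j < n)%N -> lam i < lam j.
Proof.
move=> ij jn.
have /andP[i0 i1] := @th_bounds i (ltn_trans ij jn).
have /andP[j0 j1] := @th_bounds j jn.
have tij : th i < th j.
  rewrite /th ltr_pM2r ?hh_gt0 // ltr_pM2r ?pi_gt0 // ltr_nat ltnS //.
have cij : cos (th j) < cos (th i).
  by rewrite ltr_cos // in_itv /= ltW // ltW.
rewrite !lamE ltr_pM2r ?invr_gt0 ?exprn_gt0 ?hh_gt0 //.
apply: gg_decr => //; [exact: cos_geN1 | exact: cos_le1].
Qed.

Definition s0 : seq R := [seq lam j | j <- iota 0 n].

Lemma factorE j : (aa j)%:P - 'X * (bb j)%:P = (- bb j) *: ('X - (lam j)%:P).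
Proof.
have b0 : bb j != 0 by rewrite gt_eqF // bb_gt0.
have e : (- bb j) * lam j = - aa j by rewrite /lam; field.
by rewrite -mul_polyC mulrBr -polyCM e !polyCN; ring.
Qed.

Lemma cst_neq0 : \prod_(j < n) - bb j != 0.
Proof. by apply/prodf_neq0 => j _; rewrite oppr_eq0 gt_eqF // bb_gt0. Qed.

Lemma det_form : \det (pencil (softA n.+1 (1/20)) (softB n.+1 (4/5)))
  = (\prod_(j < n) - bb j) *: \prod_(x <- s0) ('X - x%:P).
Proof.
rewrite det_pencil /s0 big_map.
have -> : \prod_(i <- iota 0 n) ('X - (lam i)%:P) = \prod_(i < n) ('X - (lam i)%:P).
  by rewrite -{1}(subn0 n) -/(index_iota 0 n) big_mkord.
rewrite -scaler_prod; apply: eq_bigr => j _; exact: factorE.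
Qed.

Lemma s0_sorted : sorted <=%R s0.
Proof.
rewrite /s0 sorted_map.
apply: (@sub_in_sorted _ (fun i => (i < n)%N) ltn); last exact: iota_ltn_sorted.
  by move=> i j /= _ jn ij; apply: ltW; apply: lam_incr.
by apply/allP => i; rewrite mem_iota add0n.
Qed.

Lemma gen_s0 : gen_eigs (softA n.+1 (1/20)) (softB n.+1 (4/5)) s0.
Proof.
split; first by rewrite size_map size_iota.
split; first exact: s0_sorted.
by exists (\prod_(j < n) - bb j); split; [exact: cst_neq0 | exact: det_form].
Qed.

Lemma uniq_s s : gen_eigs (softA n.+1 (1/20)) (softB n.+1 (4/5)) s -> s = s0.
Proof.
move=> [_ [ss [c [c0 dE]]]].
have E := det_form; rewrite dE in E.
have lc := congr1 lead_coef E.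
rewrite !lead_coefZ !lead_coef_prod_XsubC !mulr1 in lc.
rewrite lc in E; move/(scalerI cst_neq0): E => E.
apply: (sorted_eq le_trans le_anti) => //; first exact: s0_sorted.
exact: prod_XsubC_eq.
Qed.
End LA.

Lemma pi_lt (R : realType) : pi < 16/5 :> R.
Proof.
rewrite ltNge; apply/negP => hp.
have h : 0 <= cos (8/5 : R).
  apply: cos_ge0_pihalf; apply/andP; split; first lra.
  lra.
have t := @taylor4 R (8/5) ltac:(lra).
have e2 : (8/5 : R)^+2 = 64/25 by rewrite expr2; field.
have e4 : (8/5 : R)^+4 = 4096/625 by rewrite (_ : 4 = 2 * 2)%N // exprM e2 expr2; field.
rewrite e2 e4 in t; lra.
Qed.

Lemma final_alg (R : realFieldType) (g x h : R) : 0 < h -> 0 < x ->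
  `|g / h^+2 - (x / h)^+2| / (x / h)^+2 = `|g - x^+2| / x^+2.
Proof.
move=> h0 x0.
have -> : g / h^+2 - (x / h)^+2 = (g - x^+2) / h^+2 by rewrite expr_div_n; field; rewrite gt_eqF.
rewrite normrM normfV (ger0_norm (exprn_ge0 2 (ltW h0))) expr_div_n.
field; rewrite ?gt_eqF ?exprn_gt0 //.
Qed.

Theorem theorem2 (R : realType) (N : nat) (hN : (2 <= N)%N) :
  (exists s : seq R, gen_eigs (softA N (1/20)) (softB N (4/5)) s) /\
  forall s : seq R, gen_eigs (softA N (1/20)) (softB N (4/5)) s ->
  forall j : nat, (1 <= j <= N.-1)%N ->
    `|s`_j.-1 - lam_exact R j| / lam_exact R j
      < (j%:R * pi * hmesh R N) ^+ 6 / 1440.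
Proof.
case: N hN => [//|n] hN.
split; first by exists (s0 R n); exact: gen_s0.
move=> s gs j /andP[j1 jn].
have jn' : (j.-1 < n)%N by simpl in jn; lia.
rewrite (@uniq_s R n s gs) /s0 (nth_map 0%N) ?size_iota // nth_iota // add0n lamE.
have ej : (j.-1).+1 = j by lia.
have thj : th R n j.-1 = j%:R * pi * hh R n by rewrite /th ej.
have /andP[x0 xpi] := @th_bounds R n j.-1 jn'.
rewrite thj in x0 xpi *.
set x := j%:R * pi * hh R n.
have {x0}x0 : 0 < x := x0.
have {xpi}xpi : x < pi := xpi.
have hpos := hh_gt0 R n.
have ex : j%:R * pi = x / hh R n by rewrite /x mulfK // gt_eqF.
rewrite /lam_exact ex final_alg //.
rewrite /hmesh -/(hh R n) -/x.
have ey : x^+6 = (x^+2)^+3 by rewrite -exprM.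
rewrite ey.
have y0 : 0 < x^+2 by rewrite exprn_gt0.
have y1 : x^+2 <= 256/25.
  have := pi_lt R => hp.
  have : x^+2 <= (16/5)^+2.
    by rewrite lerXn2r ?nnegrE //; lra.
  rewrite expr2 [X in _ <= X -> _]expr2; lra.
have e4 : x^+4 = (x^+2)^+2 by rewrite -exprM.
have e6 : x^+6 = (x^+2)^+3 by rewrite -exprM.
have e8 : x^+8 = (x^+2)^+4 by rewrite -exprM.
have t6 := @taylor6 R x (ltW x0).
have t8 := @taylor8 R x (ltW x0).
rewrite e4 e6 e8 in t6 t8.
apply: keyy => //; [lra | lra | exact: cos_geN1].
Qed.
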